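(* Let $n\ge k\ge 2$ be integers. If $\mathcal{F}\subseteq\mathbb{Z}_{2^n}$ does not contain a projective $2^{k-1}$-cube, then $|\mathcal{F}|\le |L_1\cup L_2\cup\dots\cup L_{k-1}|$.
   Context: All arithmetic is in $\mathbb{Z}_{2^n}$. For a multiset $S=\{a_1,\dots,a_d\}$ of $d$ (not necessarily distinct) elements of $\mathbb{Z}_{2^n}$, the projective $d$-cube generated by $S$ is the set $\Sigma^*S=\{\sum_{i\in I}a_i \bmod 2^n:\emptyset\ne I\subseteq[d]\}$ (viewed as a set). A set $A\subseteq\mathbb{Z}_{2^n}$ contains a projective $d$-cube if there is a multiset $S$ of size $d$ with $\Sigma^*S\subseteq A$. Layers: for $1\le i\le n$, $L_i=\{x\in\mathbb{Z}_{2^n}: x\equiv 2^{i-1}\pmod{2^i}\}$, and $L_{n+1}=\{0\}$; thus $|L_i|=2^{n-i}$ for $i\le n$. *)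

(* Defs.v *)
From mathcomp Require Import all_boot.
Set Implicit Arguments. Unset Strict Implicit. Unset Printing Implicit Defensive.

(* Z_{2^n} is modelled as 'I_(2^n) (residues 0..2^n-1), with addition mod 2^n. *)

(* The projective d-cube generated by the multiset {a_0,...,a_{d-1}}
   (given as a d-tuple, repetitions allowed): all sums over nonempty
   index subsets, reduced mod 2^n. *)
Definition proj_cube (n d : nat) (a : d.-tuple 'I_(2 ^ n)) : {set 'I_(2 ^ n)} :=
  [set x : 'I_(2 ^ n) | [exists I : {set 'I_d},
      (I != set0) && (val x == (\sum_(i in I) val (tnth a i)) %% 2 ^ n)]].

Definition contains_proj_cube (n d : nat) (A : {set 'I_(2 ^ n)}) : Prop :=
  exists a : d.-tuple 'I_(2 ^ n), proj_cube a \subset A.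

Definition layer (n i : nat) : {set 'I_(2 ^ n)} :=
  if (1 <= i <= n) then [set x : 'I_(2 ^ n) | val x %% 2 ^ i == 2 ^ i.-1]
  else if i == n.+1 then [set x : 'I_(2 ^ n) | val x == 0]
  else set0.

Definition layers_upto (n m : nat) : {set 'I_(2 ^ n)} :=
  \bigcup_(1 <= i < m.+1) layer n i.

(* Main.v *)
Require Import Defs.
From mathcomp Require Import all_boot zify.
Set Implicit Arguments. Unset Strict Implicit. Unset Printing Implicit Defensive.

Lemma layers_div n m (z : 'I_(2 ^ n)) : m <= n -> z \notin layers_upto n m -> 2 ^ m %| val z.
Proof.
elim: m => [|m IH] hm; first by rewrite dvd1n.
rewrite /layers_upto big_nat_recr //= in_setU negb_or => /andP [h1 h2].
have := IH (ltnW hm) h1 => /dvdnP [q hq].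
move: h2; rewrite /layer hm /= inE hq expnS -muln_modl.
rewrite modn2; case oq: (odd q) => /=; first by rewrite mul1n eqxx.
by move=> _; rewrite dvdn_pmul2r ?expn_gt0 // dvdn2 oq.
Qed.

Lemma card_div n m : m <= n -> #|[set z : 'I_(2 ^ n) | 2 ^ m %| val z]| <= 2 ^ (n - m).
Proof.
move=> hm.
have hf (z : 'I_(2 ^ n)) : val z %/ 2 ^ m < 2 ^ (n - m).
  by rewrite ltn_divLR ?expn_gt0 // -expnD (subnK hm) ltn_ord.
pose f (z : 'I_(2 ^ n)) : 'I_(2 ^ (n - m)) := Ordinal (hf z).
rewrite -[X in _ <= X]card_ord; apply: leq_card_in (f) _ _.
move=> x y; rewrite !inE => hx hy /(congr1 val) /= e.
by apply: val_inj; rewrite /= -(divnK hx) -(divnK hy) e.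
Qed.
Lemma sum_perm N (f : nat -> nat) (Q : nat -> nat) :
  (forall x, x < N -> f x < N) ->
  (forall x y, x < N -> y < N -> f x = f y -> x = y) ->
  \sum_(0 <= x < N) Q (f x) = \sum_(0 <= x < N) Q x.
Proof.
move=> hf hinj.
rewrite !big_mkord.
pose g (x : 'I_N) : 'I_N := Ordinal (hf x (ltn_ord x)).
have ginj : injective g.
  move=> x y /(congr1 val) /= H; apply: val_inj; exact: (hinj _ _ (ltn_ord x) (ltn_ord y) H).
by rewrite [RHS](reindex_inj ginj).
Qed.

Lemma sum_split2 M (F : nat -> nat) :
  \sum_(0 <= y < M.*2) F y = \sum_(0 <= y < M) F y.*2 + \sum_(0 <= y < M) F y.*2.+1.
Proof.
elim: M => [|M IH]; first by rewrite !big_geq.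
rewrite doubleS !big_nat_recr //= IH; lia.
Qed.

Lemma sum_half M (F : nat -> nat) :
  \sum_(0 <= y < M.*2) F y = \sum_(0 <= y < M) F y + \sum_(0 <= y < M) F (y + M).
Proof.
rewrite -addnn (big_cat_nat _ (leq_addr M M)) //=.
by rewrite -{2}[M]add0n big_addn addnK.
Qed.

Lemma sum_exists0 M (f : nat -> nat) :
  \sum_(0 <= y < M) f y < M -> exists2 y, y < M & f y = 0.
Proof.
move=> H; case: (boolP [exists y : 'I_M, f y == 0]) => [/existsP [y /eqP hy]|/existsPn H0].
  by exists y.
exfalso; move: H; rewrite big_mkord ltnNge => /negP; apply.
apply: (@leq_trans (\sum_(i < M) 1)); first by rewrite sum_nat_const card_ord muln1.
apply: leq_sum => i _; have := H0 i; rewrite lt0n; done.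
Qed.

Lemma odd_perm n' j (P : nat -> nat) : odd j ->
  \sum_(0 <= y < 2 ^ n') P ((j * y.*2.+1) %% 2 ^ n'.+1) =
  \sum_(0 <= y < 2 ^ n') P y.*2.+1.
Proof.
move=> oj.
have E (G : nat -> nat) : \sum_(0 <= h < 2 ^ n'.+1) odd h * G h =
     \sum_(0 <= y < 2 ^ n') G y.*2.+1.
  rewrite expnS mul2n sum_split2 big1 ?add0n; last first.
    by move=> i _; rewrite odd_double.
  by apply: eq_bigr => i _; rewrite /= odd_double mul1n.
rewrite -(E (fun h => P ((j * h) %% 2 ^ n'.+1))) -E.
pose f h := (j * h) %% 2 ^ n'.+1.
rewrite -(@sum_perm (2 ^ n'.+1) f (fun h => odd h * P h)).
- apply: eq_bigr => h _; rewrite /f odd_mod; last by rewrite expnS mul2n odd_double.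
  by rewrite oddM oj.
- by move=> x _; rewrite /f ltn_mod expn_gt0.
- move=> x y hx hy; rewrite /f => /eqP.
  wlog le_yx : x y hx hy / y <= x.
    move=> W; case: (leqP y x) => h; first exact: W.
    by rewrite eq_sym => /(W y x hy hx (ltnW h)) ->.
  rewrite -/(_ == _ %[mod _]) eqn_mod_dvd; last by rewrite leq_mul2l le_yx orbT.
  rewrite -mulnBr Gauss_dvdr; last by rewrite coprimeXl // coprime2n.
  move=> hd; apply/eqP; rewrite eqn_leq le_yx andbT.
  rewrite leqNgt; apply/negP => lt.
  have hp : 0 < x - y by rewrite subn_gt0.
  have := dvdn_leq hp hd. lia.
Qed.

Lemma sum_split1 M (F : nat -> nat) : 0 < M ->
  \sum_(1 <= j < M.*2) F j = \sum_(1 <= i < M) F i.*2 + \sum_(0 <= i < M) F i.*2.+1.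
Proof.
move=> M0; have := sum_split2 M F.
rewrite (@big_ltn _ _ _ 0) ?double_gt0 // (@big_ltn _ _ _ 0 M) //= => /eqP.
by rewrite -addnA eqn_add2l => /eqP.
Qed.

Lemma dil m : forall n' (P : nat -> nat), m <= n'.+1 ->
  2 * \sum_(1 <= j < 2 ^ m) \sum_(0 <= y < 2 ^ n') P ((j * y.*2.+1) %% 2 ^ n'.+1)
  <= 2 ^ m * \sum_(0 <= y < 2 ^ n'.+1) P y.
Proof.
elim: m => [|m IH] n' P hm.
  by rewrite big_geq.
have E2 : 2 ^ m.+1 = (2 ^ m).*2 by rewrite expnS mul2n.
rewrite E2 sum_split1 ?expn_gt0 //.
rewrite (eq_bigr (fun _ => \sum_(0 <= y < 2 ^ n') P y.*2.+1) (P := xpredT) (r := index_iota 0 (2^m))); last first.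
  by move=> i _; rewrite odd_perm //= odd_double.
rewrite sum_nat_const_nat subn0.
have E3 : 2 ^ n'.+1 = (2 ^ n').*2 by rewrite expnS mul2n.
rewrite [in X in _ <= X]E3 sum_split2.
set S0 := \sum_(0 <= y < 2 ^ n') P y.*2.
set S1 := \sum_(0 <= y < 2 ^ n') P y.*2.+1.
set Ev := \sum_(1 <= i < 2 ^ m) _.
suff H : Ev <= 2 ^ m * S0.
  rewrite -mul2n; set K := 2 ^ m in H *; nia.
rewrite /Ev /S0; clear Ev S0 S1; case: n' hm E3 => [|n''] hm E3.
  have m0 : m = 0 by lia.
  by rewrite m0 big_geq.
rewrite (eq_bigr (fun i => 2 * \sum_(0 <= y < 2 ^ n'') (fun z => P z.*2) ((i * y.*2.+1) %% 2 ^ n''.+1))); last first.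
  move=> i _.
  have E4 : 2 ^ n''.+1 = (2^n'').*2 by rewrite expnS mul2n.
  rewrite [in LHS]E4 sum_half [RHS]mulSn mul1n; congr (_ + _).
    apply: eq_bigr => y _ /=.
    by congr P; rewrite -!mul2n muln_modr -expnS mulnA.
  apply: eq_bigr => y _ /=.
  congr P; rewrite -[in RHS]mul2n muln_modr -expnS.
  have -> : i.*2 * (y + 2 ^ n'').*2.+1 = i * 2 ^ n''.+2 + 2 * (i * y.*2.+1).
    rewrite !expnS; set K := 2 ^ n''; rewrite -!mul2n; nia.
  by rewrite modnMDl.
rewrite -big_distrr /=.
have := IH n'' (fun z => P z.*2) hm.
by [].

Qed.

Lemma sum_zero_at a b (f : nat -> nat) j :
  \sum_(a <= i < b) f i = 0 -> a <= j < b -> f j = 0.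
Proof.
move=> hs hj; apply/eqP; rewrite -leqn0 -hs.
rewrite /index_iota (bigD1_seq j) ?iota_uniq //=; last by rewrite mem_iota; lia.
exact: leq_addr.
Qed.

Lemma trans_sum N c (P : nat -> nat) : 0 < N ->
  \sum_(0 <= x < N) P ((x + c) %% N) = \sum_(0 <= x < N) P x.
Proof.
move=> N0; apply: (@sum_perm N (fun x => (x + c) %% N) P).
  by move=> x _; rewrite ltn_mod.
move=> x y hx hy /eqP; rewrite -/(_ == _ %[mod _]) eqn_modDr.
by rewrite !modn_small // => /eqP.
Qed.

Theorem theorem1p6 (n k : nat) (hk : 2 <= k) (hkn : k <= n)
  (F : {set 'I_(2 ^ n)}) :
  ~ contains_proj_cube (2 ^ k.-1) F ->
  #|F| <= #|layers_upto n k.-1|.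
Proof.
move=> Hno; rewrite leqNgt; apply/negP => HF; apply: Hno.
set m := k.-1.
have m1 : 1 <= m by rewrite /m; lia.
have mn : m < n by rewrite /m; lia.
set N := 2 ^ n.
have N0 : 0 < N by rewrite expn_gt0.
pose P (y : nat) : nat := [exists z : 'I_N, (val z == y) && (z \notin F)].
have sumP : \sum_(0 <= y < N) P y = #|~: F|.
  rewrite big_mkord -sum1_card [RHS]big_mkcond /=; apply: eq_bigr => i _.
  rewrite /P inE; case: (boolP (i \in F)) => hi /=.
    by apply/eqP; rewrite eqb0; apply/existsP => -[z /andP [/eqP /val_inj -> ]]; rewrite hi.
  by have -> : [exists z : 'I_N, (val z == i) && (z \notin F)] by apply/existsP; exists i; rewrite eqxx hi.
have Pin (z : 'I_N) : P (val z) = 0 -> z \in F.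
  move=> h; apply/negPn/negP => hz; move: h; rewrite /P.
  by have -> : [exists z0 : 'I_N, (val z0 == val z) && (z0 \notin F)] by apply/existsP; exists z; rewrite eqxx hz.
have HG : #|~: F| * 2 ^ m < N.
  have h1 := cardsC F; have h2 := cardsC (layers_upto n m).
  have h3 : #|~: layers_upto n m| <= 2 ^ (n - m).
    apply: leq_trans (card_div (ltnW mn)); apply: subset_leq_card; apply/subsetP => z.
    by rewrite !inE; apply: layers_div (ltnW mn).
  have h4 : #|~: F| < 2 ^ (n - m).
    move: HF; rewrite card_ord in h1 h2; rewrite -/m; lia.
  apply: (@leq_trans (2 ^ (n - m) * 2 ^ m)); first by rewrite ltn_mul2r expn_gt0.
  by rewrite -expnD subnK // ltnW.
have [n' hn] : exists n', n = n'.+1 by exists n.-1; lia.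
have EN : N = (2 ^ n').*2 by rewrite /N hn expnS mul2n.
have [y0 hy0 Hy0] : exists2 y0, y0 < 2 ^ n' &
    \sum_(1 <= j < 2 ^ m) P ((j * y0.*2.+1) %% N) = 0.
  apply: sum_exists0.
  have := dil P (_ : m <= n'.+1); rewrite -hn -/N sumP exchange_big_nat /=.
  move=> /(_ (ltnW mn)).
  set X := \sum_(0 <= i < 2 ^ n') _.
  move: HG; rewrite EN mulnC; set G := #|~: F|; set K := 2 ^ m; lia.
set h := y0.*2.+1.
have hN : h < N by rewrite EN /h -!muln2; lia.
have S1 j : 1 <= j < 2 ^ m -> P ((j * h) %% N) = 0.
  by move=> hj; apply: (sum_zero_at Hy0).
have [x0 hx0 Hx0] : exists2 x0, x0 < N &
    \sum_(0 <= j < 2 ^ m) P ((x0 + j * h) %% N) = 0.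
  apply: sum_exists0; rewrite exchange_big_nat /=.
  rewrite (eq_bigr (fun _ => #|~: F|)); last first.
    by move=> j _; rewrite trans_sum.
  by rewrite sum_nat_const_nat subn0 mulnC.
have S2 j : j < 2 ^ m -> P ((x0 + j * h) %% N) = 0.
  by move=> hj; apply: (sum_zero_at Hx0).
pose X : 'I_N := Ordinal hx0.
pose H : 'I_N := Ordinal hN.
exists [tuple (if val i == 0 then X else H) | i < 2 ^ m].
apply/subsetP => z; rewrite inE => /existsP [I /andP [In0 /eqP hz]].
apply: Pin.
set c0 := \sum_(i in I | val i == 0) 1.
set c1 := \sum_(i in I | val i != 0) 1.
have Hs : \sum_(i in I) val (tnth [tuple (if val i0 == 0 then X else H) | i0 < 2 ^ m] i)
    = c0 * x0 + c1 * h.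
  rewrite (bigID (fun i => val i == 0)) /=; congr (_ + _); rewrite /c0 /c1 big_distrl /=;
    apply: eq_bigr => i /andP [_ hi]; rewrite tnth_mktuple.
    by rewrite hi mul1n.
  by rewrite (negbTE hi) mul1n.
have Hc : c0 + c1 = #|I| by rewrite /c0 /c1 -sum1_card [RHS](bigID (fun i => val i == 0)).
have hI : #|I| <= 2 ^ m by rewrite -[X in _ <= X]card_ord max_card.
have o0m : 0 < 2 ^ m by rewrite expn_gt0.
pose o0 : 'I_(2 ^ m) := Ordinal o0m.
rewrite hz -/N Hs.
case: (boolP (o0 \in I)) => ho.
  have c01 : c0 = 1.
    rewrite /c0 (big_pred1 o0) // => i /=.
    apply/andP/eqP => [[_ /eqP hi]|->]; last by [].
    exact: val_inj.
  rewrite c01 mul1n; apply: S2; lia.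
have c00 : c0 = 0.
  rewrite /c0 big_pred0 // => i /=; apply/andP => -[hi /eqP hv].
  by move: ho; rewrite (_ : o0 = i) ?hi //; apply: val_inj.
have hlt : #|I| < 2 ^ m.
  rewrite -[X in _ < X]card_ord -cardsT; apply: proper_card; rewrite properT.
  by apply/negP => /eqP hT; move: ho; rewrite hT inE.
have hpos : 0 < #|I| by rewrite card_gt0.
rewrite c00 mul0n add0n; apply: S1; lia.
Qed.
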